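(* $I_n^0$ is a right ideal of $\Omega(B_n)$. Moreover, it is the principal right ideal generated by $X_{\{0\}}$, i.e. $I_n^0=X_{\{0\}}\cdot\Omega(B_n)$.
   Context: Group algebra $\mathbb{Q}B_n$ with product composition $(uv)(i)=u(v(i))$. $B_n$: signed permutations $w=w_1\dots w_n$ (bijections of $\{\pm1,\dots,\pm n\}$ with $w(-i)=-w(i)$), values ordered $\cdots<-2<-1<1<2<\cdots$, $w_0=0$; $\mathrm{Des}(w)=\{i\in\{0,\dots,n-1\}:w_i>w_{i+1}\}$; $X_J=\sum_{\mathrm{Des}(w)\subseteq J}w$; $I_n^0=\mathrm{span}\{X_J: J\subseteq\{0,\dots,n-1\},\,0\in J\}$. A signed composition of $n$ is a sequence $\alpha=(a_1,\dots,a_k)$ of nonzero integers with $|a_1|+\dots+|a_k|=n$. For such $\alpha$, let $T_\alpha$ be the sum of all $w\in B_n$ such that, cutting $[n]$ into successive intervals of lengths $|a_1|,\dots,|a_k|$: on each interval the entries $w_j$ all have sign equal to the sign of the corresponding $a_i$ and $|w_j|$ is increasing, and these intervals are maximal with these two properties. The Mantaci–Reutenauer algebra $\Omega(B_n)$ is $\mathrm{span}\{T_\alpha\}$ over all signed compositions $\alpha$ of $n$; it is a subalgebra of $\mathbb{Q}B_n$ containing $\mathrm{span}\{X_J\}$. *)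

(* Defs.v *)
From HB Require Import structures.
From mathcomp Require Import all_boot all_order all_algebra all_fingroup.
Set Implicit Arguments. Unset Strict Implicit. Unset Printing Implicit Defensive.
Import Order.TTheory GRing.Theory Num.Theory.
Local Open Scope ring_scope.

(* Signed values: (true, k) stands for -(k+1), (false, k) for k+1. *)
Definition sval (n : nat) := (bool * 'I_n)%type.
Definition sneg n (x : sval n) : sval n := (~~ x.1, x.2).
Definition sint n (x : sval n) : int :=
  if x.1 then - (x.2.+1)%:Z else (x.2.+1)%:Z.

Definition is_signed n (w : {perm sval n}) : bool :=
  [forall x, w (sneg x) == sneg (w x)].

Definition Bn (n : nat) := {w : {perm sval n} | is_signed w}.

(* u v = w as composition of functions: (uv)(i) = u(v(i)) *)
Definition compeq n (u v w : Bn n) : bool :=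
  [forall x, val u (val v x) == val w x].

Notation QB n := {ffun Bn n -> rat}.
Definition qbmul n (a b : QB n) : QB n :=
  [ffun w => \sum_(u : Bn n) \sum_(v : Bn n) (if compeq u v w then a u * b v else 0)].
Definition basis n (w : Bn n) : QB n := [ffun u => (u == w)%:R].

(* w_k as a signed integer, with w_0 = 0 (k is 1-based; 0 outside range). *)
Definition wv n (w : Bn n) (k : nat) : int :=
  match k with
  | 0 => 0
  | k'.+1 => match insub k' with Some j => sint (val w (false, j)) | None => 0 end
  end.

Definition Des n (w : Bn n) : {set 'I_n} := [set i : 'I_n | wv w i.+1 < wv w i].

Definition XJ n (J : {set 'I_n}) : QB n := \sum_(w | Des w \subset J) basis w.

Definition is_scomp (n : nat) (al : seq int) : bool :=
  all (fun a => a != 0) al && (sumn (map absz al) == n).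
Definition psums (al : seq int) : seq nat := scanl addn 0%N (map absz al).
(* index of the interval containing 0-based position j *)
Definition blk (al : seq int) (j : nat) : nat := count (fun s => s <= j)%N (psums al).
Definition pos_at n (w : Bn n) (j : nat) : bool := 0 < wv w j.+1.
Definition abs_at n (w : Bn n) (j : nat) : nat := absz (wv w j.+1).
Definition incr_at n (w : Bn n) (j : nat) : bool :=
  (pos_at w j == pos_at w j.+1) && (abs_at w j < abs_at w j.+1)%N.
Definition inT n (al : seq int) (w : Bn n) : bool :=
  [forall j : 'I_n, pos_at w j == (0 < nth 0 al (blk al j))] &&
  [forall j : 'I_n, (j.+1 < n)%N ==>
      (if (j.+1 \in psums al) then ~~ incr_at w j else incr_at w j)].
Definition Talpha n (al : seq int) : QB n := \sum_(w | inT al w) basis w.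

Definition inspan n (G : QB n -> Prop) (x : QB n) : Prop :=
  exists s : seq (rat * QB n),
    (forall p, p \in s -> G p.2) /\ x = \sum_(p <- s) [ffun w => p.1 * p.2 w].

Definition Omega n : QB n -> Prop :=
  inspan (fun x => exists al, is_scomp n al /\ x = Talpha n al).

Definition I0 n : QB n.+1 -> Prop :=
  inspan (fun x => exists J : {set 'I_n.+1}, ord0 \in J /\ x = XJ J).

Arguments Omega n x : clear implicits.
Arguments I0 n x : clear implicits.

(* Main.v *)
Require Import Defs.
From HB Require Import structures.
From mathcomp Require Import all_boot all_order all_algebra all_fingroup.
From mathcomp Require Import zify ring lra.
Set Implicit Arguments. Unset Strict Implicit. Unset Printing Implicit Defensive.
Import Order.TTheory GRing.Theory Num.Theory.
Local Open Scope ring_scope.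
Definition scl n (c : rat) (x : QB n) : QB n := [ffun w => c * x w].

Section Lin.
Variable n : nat.
Implicit Types (x y z : QB n) (G : QB n -> Prop).

Lemma inspan_ind G (P : QB n -> Prop) : P 0 ->
  (forall x y, P x -> P y -> P (x + y)) -> (forall c x, P x -> P (scl c x)) ->
  (forall g, G g -> P g) -> forall x, inspan G x -> P x.
Proof.
move=> P0 PD PZ PG x [s [Hs ->]].
elim: s Hs => [|p s IH] Hs; first by rewrite big_nil.
rewrite big_cons; apply: PD; last by apply: IH => q hq; apply: Hs; rewrite in_cons hq orbT.
by apply: (PZ p.1 p.2); apply: PG; apply: Hs; rewrite mem_head.
Qed.

Lemma inspan0 G : inspan G 0.
Proof. by exists [::]; split => //; rewrite big_nil. Qed.

Lemma inspanD G x y : inspan G x -> inspan G y -> inspan G (x + y).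
Proof.
move=> [s [Hs ->]] [t [Ht ->]]; exists (s ++ t); split; last by rewrite big_cat.
by move=> p; rewrite mem_cat => /orP[] H; [exact: Hs|exact: Ht].
Qed.

Lemma inspanZ G c x : inspan G x -> inspan G (scl c x).
Proof.
move=> [s [Hs ->]]; exists [seq (c * p.1, p.2) | p <- s]; split.
  by move=> q /mapP[p ps ->] /=; exact: Hs.
apply/ffunP => w; rewrite !ffunE big_map !sum_ffunE big_distrr /=.
by apply: eq_bigr => p _; rewrite !ffunE mulrA.
Qed.

Lemma inspan_gen G g : G g -> inspan G g.
Proof.
move=> Gg; exists [:: (1, g)]; split; first by move=> p; rewrite inE => /eqP->.
by apply/ffunP => w; rewrite big_seq1 ffunE /= mul1r.
Qed.

Lemma inspan_trans G G' : (forall g, G g -> inspan G' g) ->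
  forall x, inspan G x -> inspan G' x.
Proof.
move=> H; apply: inspan_ind; [exact: inspan0|exact: inspanD|exact: inspanZ|exact: H].
Qed.

Lemma inspan_sum G (I : finType) (P : pred I) (F : I -> QB n) :
  (forall i, P i -> inspan G (F i)) -> inspan G (\sum_(i | P i) F i).
Proof.
move=> H; elim/big_rec: _ => [|i x Pi Hx]; first exact: inspan0.
by apply: inspanD => //; apply: H.
Qed.

Lemma inspan_sumseq G (I : eqType) (r : seq I) (F : I -> QB n) :
  (forall i, i \in r -> inspan G (F i)) -> inspan G (\sum_(i <- r) F i).
Proof.
elim: r => [|i r IH] H; first by rewrite big_nil; exact: inspan0.
rewrite big_cons; apply: inspanD; first by apply: H; rewrite mem_head.
by apply: IH => j jr; apply: H; rewrite in_cons jr orbT.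
Qed.

Lemma inspan_ext G x y : inspan G x -> x = y -> inspan G y.
Proof. by move=> ? <-. Qed.

Lemma qbmulDl x y z : qbmul (x + y) z = qbmul x z + qbmul y z.
Proof.
apply/ffunP => w; rewrite !ffunE -big_split; apply: eq_bigr => u _.
rewrite -big_split; apply: eq_bigr => v _; rewrite !ffunE.
by case: ifP => _; rewrite ?addr0 ?mulrDl.
Qed.

Lemma qbmulDr x y z : qbmul x (y + z) = qbmul x y + qbmul x z.
Proof.
apply/ffunP => w; rewrite !ffunE -big_split; apply: eq_bigr => u _.
rewrite -big_split; apply: eq_bigr => v _; rewrite !ffunE.
by case: ifP => _; rewrite ?addr0 ?mulrDr.
Qed.

Lemma qbmulZl c x z : qbmul (scl c x) z = scl c (qbmul x z).
Proof. rewrite /scl.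
apply/ffunP => w; rewrite !ffunE big_distrr; apply: eq_bigr => u _.
rewrite big_distrr; apply: eq_bigr => v _; rewrite !ffunE.
by case: (compeq u v w); rewrite /= ?mulr0 ?mulrA.
Qed.

Lemma qbmulZr c x z : qbmul x (scl c z) = scl c (qbmul x z).
Proof. rewrite /scl.
apply/ffunP => w; rewrite !ffunE big_distrr; apply: eq_bigr => u _.
rewrite big_distrr; apply: eq_bigr => v _; rewrite !ffunE.
by case: (compeq u v w); rewrite /= ?mulr0 // mulrCA.
Qed.

Lemma qbmul0l z : qbmul 0 z = 0.
Proof.
apply/ffunP => w; rewrite !ffunE big1 // => u _; rewrite big1 // => v _.
by rewrite ffunE mul0r; case: ifP.
Qed.

Lemma qbmul0r z : qbmul z 0 = 0.
Proof.
apply/ffunP => w; rewrite !ffunE big1 // => u _; rewrite big1 // => v _.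
by rewrite ffunE mulr0; case: ifP.
Qed.

End Lin.
Section Bn.
Variable n : nat.
Implicit Types (u v w : Bn n).

Definition ent w (p : 'I_n) : Defs.sval n := val w (false, p).
Definition W w (p : 'I_n) : int := sint (ent w p).

Lemma sneg_inj : injective (@sneg n).
Proof. by move=> [a i] [b j] /= [] /negb_inj -> ->. Qed.

Lemma snegK : involutive (@sneg n).
Proof. by move=> [a i]; rewrite /sneg /= negbK. Qed.

Lemma sint_sneg (x : Defs.sval n) : sint (sneg x) = - sint x.
Proof. by case: x => [[] i]; rewrite /sint /= ?opprK. Qed.

Lemma sint_inj : injective (@sint n).
Proof.
move=> [[] i] [[] j]; rewrite /sint /= => H; try (exfalso; lia); congr (_, _); apply: val_inj => /=; lia.
Qed.

Lemma wvE w (p : 'I_n) : wv w p.+1 = W w p.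
Proof.
rewrite /wv; case: insubP => [j _ /val_inj -> //|]; by rewrite ltn_ord.
Qed.

Lemma wv_lt w k (H : (k < n)%N) : wv w k.+1 = W w (Ordinal H).
Proof. by rewrite -wvE. Qed.

Lemma Bsigned w x : val w (sneg x) = sneg (val w x).
Proof. by have /forallP/(_ x)/eqP := valP w. Qed.

Lemma ent_true w p : val w (true, p) = sneg (ent w p).
Proof. by rewrite -Bsigned. Qed.

Lemma W_inj w : injective (W w).
Proof. by move=> p q /sint_inj /perm_inj [] ->. Qed.

Lemma W_neq0 w p : W w p != 0.
Proof. by rewrite /W /sint; case: ifP. Qed.

Lemma ent2_inj w p q : (ent w p).2 = (ent w q).2 -> p = q.
Proof.
rewrite /ent; case E1: (val w (false, p)) => [b1 i1]; case E2: (val w (false, q)) => [b2 i2] /= Ei.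
subst i2; case: (eqVneq b1 b2) => [Eb|Nb].
  by subst b2; move: E1; rewrite -E2 => /perm_inj [].
have Hb : ~~ b2 = b1 by destruct b1, b2.
have : val w (true, q) = (b1, i1) by rewrite ent_true /ent E2 /sneg /= Hb.
by rewrite -E1 => /perm_inj.
Qed.

Lemma comp_signed u v : is_signed ((val v * val u)%g).
Proof. by apply/forallP => x; rewrite !permM !Bsigned. Qed.
Definition bcomp u v : Bn n := @exist _ (fun s => is_signed s) _ (comp_signed u v).

Lemma inv_signed v : is_signed ((val v)^-1%g).
Proof.
apply/forallP => x; apply/eqP; apply: (@perm_inj _ (val v)).
by rewrite permKV Bsigned permKV.
Qed.
Definition binv v : Bn n := @exist _ (fun s => is_signed s) _ (inv_signed v).

Lemma compeqE u v w : compeq u v w = (u == bcomp w (binv v)).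
Proof.
apply/forallP/eqP => [H|->].
  apply: val_inj; apply/permP => x /=; rewrite permM.
  by rewrite -(eqP (H ((val v)^-1%g x))) permKV.
by move=> x; apply/eqP; rewrite /= !permM permK.
Qed.

Lemma qbmulE (x y : QB n) w :
  qbmul x y w = \sum_v x (bcomp w (binv v)) * y v.
Proof.
rewrite ffunE exchange_big; apply: eq_bigr => v _.
rewrite (bigD1 (bcomp w (binv v))) //= compeqE eqxx big1 ?addr0 // => u Hu.
by rewrite compeqE (negbTE Hu).
Qed.

Lemma basisE w u : basis w u = (u == w)%:R.
Proof. by rewrite ffunE. Qed.

Lemma sum_basisE (P : pred (Bn n)) u : (\sum_(w | P w) basis w) u = (P u)%:R.
Proof.
rewrite sum_ffunE; under eq_bigr do rewrite ffunE.
case Pu: (P u).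
  rewrite (bigD1 u) //= eqxx big1 ?addr0 // => w /andP[_ ne].
  by rewrite eq_sym (negbTE ne).
by rewrite big1 // => w Pw; case: eqP => // E; move: Pw; rewrite -E Pu.
Qed.

End Bn.
Section Rank.
Local Open Scope nat_scope.
Variable n : nat.
Variable lt : rel 'I_n.
Hypothesis ltI : forall p, ~~ lt p p.
Hypothesis ltT : forall p q r, lt p q -> lt q r -> lt p r.
Hypothesis ltC : forall p q, p != q -> lt p q || lt q p.

Definition rnk p := #|[set p' | lt p' p]|.

Lemma rnk_lt p q : lt p q -> rnk p < rnk q.
Proof.
move=> Hpq; apply: proper_card; apply/properP; split.
  by apply/subsetP => x; rewrite !inE => H; apply: ltT H Hpq.
by exists p; rewrite !inE ?Hpq ?(negbTE (ltI p)).
Qed.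

Lemma rnk_ltE p q : (rnk p < rnk q) = lt p q.
Proof.
apply/idP/idP; last exact: rnk_lt.
move=> H; case: (eqVneq p q) => [E|Npq]; first by move: H; rewrite E ltnn.
case/orP: (ltC Npq) => // /rnk_lt H2; by move: (ltn_trans H H2); rewrite ltnn.
Qed.

Lemma rnk_inj : injective rnk.
Proof.
move=> p q E; apply/eqP; apply/negP => /negP Npq.
by case/orP: (ltC Npq) => /rnk_lt; rewrite E ltnn.
Qed.

Lemma rnk_bound p : rnk p < n.
Proof.
rewrite -[n]card_ord -cardsT; apply: proper_card; apply/properP; split.
  by apply/subsetP => x; rewrite !inE.
by exists p; rewrite !inE ?(negbTE (ltI p)).
Qed.

Definition rnko p : 'I_n := Ordinal (rnk_bound p).
Lemma rnko_inj : injective rnko.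
Proof. by move=> p q [] /rnk_inj. Qed.
Definition rperm : 'S_n := perm rnko_inj.
Lemma rpermE p : (rperm p : nat) = rnk p.
Proof. by rewrite /rperm permE. Qed.

Lemma rperm_ltE p q : (rperm p < rperm q) = lt p q.
Proof. by rewrite !rpermE rnk_ltE. Qed.

Lemma rnk_down (D : {set 'I_n}) :
  (forall p q, lt q p -> p \in D -> q \in D) -> forall p, (rnk p < #|D|) = (p \in D).
Proof.
move=> HD p; apply/idP/idP => [H|pD].
  apply: contraTT H => pD; rewrite -leqNgt.
  apply: subset_leq_card; apply/subsetP => x xD; rewrite inE.
  case: (eqVneq x p) => [E|Nxp]; first by move: pD; rewrite -E xD.
  case/orP: (ltC Nxp) => // /HD /(_ xD) H; by rewrite H in pD.
rewrite /rnk; apply: proper_card; apply/properP; split.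
  by apply/subsetP => x; rewrite inE => /HD; apply.
by exists p; rewrite ?inE ?(negbTE (ltI p)).
Qed.

End Rank.

Lemma card_ltord n (q : 'I_n) : #|[set q' : 'I_n | (q' < q)%N]| = q.
Proof.
have Hq : (q <= n)%N := ltnW (ltn_ord q).
have winj : injective (widen_ord Hq) by move=> x y /(congr1 val) /= /val_inj.
rewrite -[X in _ = X]card_ord -(card_imset _ winj).
apply: eq_card => x; rewrite inE; apply/idP/imsetP => [Hx|[y _ ->]] /=.
  by exists (Ordinal Hx) => //; apply: val_inj.
exact: ltn_ord.
Qed.

Section Shuffle.
Local Open Scope nat_scope.
Variable n : nat.
Variable seg : 'I_n -> nat.
Hypothesis segM : forall q r : 'I_n, q <= r -> seg q <= seg r.
Variable C : {set 'I_n}.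

Definition ltk (g : 'I_n -> nat) (b : 'I_n -> int) : rel 'I_n :=
  fun p' p => (g p' < g p) || ((g p' == g p) && (b p' < b p)%R).

Section LtkProps.
Variables (g : 'I_n -> nat) (b : 'I_n -> int).
Hypothesis binj : injective b.
Lemma ltkI p : ~~ ltk g b p p.
Proof. by rewrite /ltk ltnn eqxx Order.POrderTheory.ltxx. Qed.
Lemma ltkT p q r : ltk g b p q -> ltk g b q r -> ltk g b p r.
Proof.
rewrite /ltk => /orP[H1|/andP[/eqP E1 H1]] /orP[H2|/andP[/eqP E2 H2]].
- by rewrite (ltn_trans H1 H2).
- by rewrite -E2 H1.
- by rewrite E1 H2.
- by rewrite E1 E2 eqxx (Order.POrderTheory.lt_trans H1 H2) orbT.
Qed.
Lemma ltkC p q : p != q -> ltk g b p q || ltk g b q p.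
Proof.
move=> Npq; rewrite /ltk; case: (ltngtP (g p) (g q)) => //= _.
case: (ltgtP (b p) (b q)) => // /binj E'.
by rewrite E' eqxx in Npq.
Qed.
Lemma ltk_le p q : ltk g b p q -> g p <= g q.
Proof. by rewrite /ltk => /orP[/ltnW|/andP[/eqP-> _]]. Qed.
End LtkProps.

Definition Eok (s : 'S_n) := [forall p : 'I_n, forall p' : 'I_n,
  ((p' == p.+1 :> nat) && (p \notin C)) ==> (s p < s p')].
Definition Kok (s : 'S_n) (a : 'I_n -> int) := [forall q : 'I_n, forall r : 'I_n,
  ((q < r) && (seg q == seg r)) ==> (a ((s^-1)%g q) < a ((s^-1)%g r))%R].
Definition Vset (a : 'I_n -> int) := [set s : 'S_n | Eok s && Kok s a].

Lemma KokP s a (q r : 'I_n) : Kok s a -> q < r -> seg q = seg r ->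
  (a ((s^-1)%g q) < a ((s^-1)%g r))%R.
Proof. by move=> /forallP/(_ q)/forallP/(_ r)/implyP H qr sqr; apply: H; rewrite qr sqr eqxx. Qed.

Lemma Kok_ltk s a : injective a -> Kok s a -> forall p' p,
  (s p' < s p) = ltk (seg \o s) a p' p.
Proof.
move=> ainj K p' p; rewrite /ltk /=; apply/idP/idP => [H|].
  have := segM (ltnW H); rewrite leq_eqVlt => /orP[/eqP E|->] //.
  by have := KokP K H E; rewrite !permK => ->; rewrite E eqxx orbT.
case/orP => [H|/andP[/eqP E H]].
  by rewrite ltnNge; apply/negP => /segM; rewrite leqNgt H.
case: (ltngtP (s p') (s p)) => // [H'|/val_inj/perm_inj E'].
  by have := KokP K H' (esym E); rewrite !permK => H2; move: (Order.POrderTheory.lt_trans H H2); rewrite Order.POrderTheory.ltxx.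
by move: H; rewrite E' Order.POrderTheory.ltxx.
Qed.

Lemma card_lt_perm (s : 'S_n) (p : 'I_n) : #|[set p' | s p' < s p]| = s p.
Proof.
rewrite -[X in _ = X]card_ltord -[X in _ = X](card_preimset _ (@perm_inj _ s)).
by apply: eq_card => x; rewrite !inE.
Qed.

Definition tau (g : 'I_n -> nat) (b : 'I_n -> int) (binj : injective b) : 'S_n :=
  rperm (@ltkI g b) (@ltkT g b) (ltkC g binj).

Lemma tauE g b (binj : injective b) p : (tau g binj p : nat) = rnk (ltk g b) p.
Proof. exact: rpermE. Qed.

Lemma tau_ltE g b (binj : injective b) p q : (tau g binj p < tau g binj q) = ltk g b p q.
Proof. exact: rperm_ltE. Qed.

Lemma tau_ext g1 g2 b (binj : injective b) : g1 =1 g2 -> tau g1 binj = tau g2 binj.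
Proof.
move=> E; apply/permP => p; apply: ord_inj; rewrite !tauE /rnk.
by apply: eq_card => x; rewrite !inE /ltk !E.
Qed.

Lemma ltnC' (p q : 'I_n) : p != q -> (p < q) || (q < p).
Proof. by rewrite -val_eqE /= neq_ltn. Qed.

Lemma ord_down (D : {set 'I_n}) : (forall p q : 'I_n, q < p -> p \in D -> q \in D) ->
  forall q : 'I_n, (q < #|D|) = (q \in D).
Proof.
move=> HD q; have := @rnk_down n (fun x y : 'I_n => x < y) (fun p => negbT (ltnn p)) ltnC' D HD q.
by rewrite /rnk card_ltord.
Qed.

Section Fixed.
Variables (a b : 'I_n -> int) (ainj : injective a) (binj : injective b).

Lemma R1 s : s \in Vset a -> tau (seg \o s) ainj = s.
Proof.
rewrite inE => /andP[_ K]; apply/permP => p; apply: ord_inj; rewrite tauE /rnk.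
rewrite -[RHS]card_lt_perm; apply: eq_card => x; rewrite !inE.
by rewrite (Kok_ltk ainj K).
Qed.

Lemma R2 s : s \in Vset a -> forall p, seg (tau (seg \o s) binj p) = seg (s p).
Proof.
move=> sV; set F := tau (seg \o s) binj.
have key : forall j p, (seg (F p) < j) = (seg (s p) < j).
  move=> j p; set D := [set q : 'I_n | seg q < j].
  have HD : forall q : 'I_n, (q < #|D|) = (q \in D).
    apply: ord_down => x y yx; rewrite !inE => H.
    by apply: leq_ltn_trans H; apply: segM; apply: ltnW.
  have -> : seg (F p) < j = (F p \in D) by rewrite inE.
  rewrite -HD tauE.
  have -> : #|D| = #|[set x | seg (s x) < j]|.
    rewrite -[X in X = _](card_preimset _ (@perm_inj _ s)); apply: eq_card => x; by rewrite !inE.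
  rewrite (rnk_down (@ltkI _ _) (ltkC _ binj)); first by rewrite inE.
  move=> x y /ltk_le /= H; rewrite !inE => H2; exact: leq_ltn_trans H H2.
move=> p; apply/eqP; rewrite eqn_leq.
by rewrite -ltnS key ltnS leqnn /= -ltnS -key ltnS leqnn.
Qed.

Hypothesis Hab : forall p p' : 'I_n, p' = p.+1 :> nat -> p \notin C ->
  (a p < a p')%R = (b p < b p')%R.

Lemma R3 s : s \in Vset a -> tau (seg \o s) binj \in Vset b.
Proof.
move=> sV; have := sV; rewrite inE => /andP[E K]; set F := tau (seg \o s) binj.
rewrite inE; apply/andP; split.
  apply/forallP => p; apply/forallP => p'; apply/implyP => /andP[/eqP Hp' HC].
  have := E; move/forallP/(_ p)/forallP/(_ p')/implyP; rewrite Hp' eqxx HC => /(_ isT).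
  rewrite (Kok_ltk ainj K) tau_ltE /ltk /= => /orP[->//|/andP[Eg Ha]].
  by rewrite Eg -(Hab Hp' HC) Ha orbT.
apply/forallP => q; apply/forallP => r; apply/implyP => /andP[qr /eqP sqr].
have : F ((F^-1)%g q) < F ((F^-1)%g r) by rewrite !permKV.
rewrite tau_ltE /ltk /= -!(R2 sV) !permKV sqr ltnn eqxx /=.
done.
Qed.

Lemma R4 : {in Vset a &, injective (fun s : 'S_n => tau (seg \o s) binj)}.
Proof.
move=> s1 s2 V1 V2 /= Ef.
have Eg : (seg \o s1) =1 (seg \o s2).
  by move=> p /=; rewrite -(R2 V1) -(R2 V2) Ef.
by rewrite -(R1 V1) -(R1 V2); apply: tau_ext.
Qed.

Lemma Vset_le : #|Vset a| <= #|Vset b|.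
Proof.
rewrite -(card_in_imset R4); apply: subset_leq_card; apply/subsetP => x /imsetP[s sV ->].
exact: R3.
Qed.
End Fixed.

Lemma Vset_card a b (ainj : injective a) (binj : injective b) :
  (forall p p' : 'I_n, p' = p.+1 :> nat -> p \notin C -> (a p < a p')%R = (b p < b p')%R) ->
  #|Vset a| = #|Vset b|.
Proof.
move=> H; apply/eqP; rewrite eqn_leq (Vset_le ainj binj H) (Vset_le binj ainj) //.
by move=> p p' E1 E2; rewrite (H p p' E1 E2).
Qed.

Lemma tau_ext2 g1 g2 b (binj : injective b) :
  (forall p q, ltk g1 b p q = ltk g2 b p q) -> tau g1 binj = tau g2 binj.
Proof.
move=> E; apply/permP => p; apply: ord_inj; rewrite !tauE /rnk.
by apply: eq_card => x; rewrite !inE E.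
Qed.

Lemma Vset_const a (ainj : injective a) : (forall q r, seg q = seg r) ->
  #|Vset a| = [forall p : 'I_n, forall p' : 'I_n,
      ((p' == p.+1 :> nat) && (p \notin C)) ==> (a p < a p')%R].
Proof.
move=> Hc; set rho := tau (fun _ => 0) ainj.
have rhoE : forall p q, (rho p < rho q) = (a p < a q)%R.
  by move=> p q; rewrite tau_ltE /ltk ltnn eqxx.
have sub : Vset a \subset [set rho].
  apply/subsetP => s sV; rewrite inE -(R1 ainj sV); apply/eqP; apply: tau_ext2 => p q.
  by rewrite /ltk /= (Hc (s p) (s q)) ltnn eqxx.
set cond := [forall p : 'I_n, _].
have rhoV : (rho \in Vset a) = cond.
  rewrite inE; have -> : Kok rho a.
    apply/forallP => q; apply/forallP => r; apply/implyP => /andP[qr _].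
    by rewrite -rhoE !permKV.
  rewrite andbT /Eok; apply: eq_forallb => p; apply: eq_forallb => p'.
  by rewrite rhoE.
case E: cond in rhoV *.
  have -> : Vset a = [set rho] by apply/eqP; rewrite eqEsubset sub sub1set rhoV.
  by rewrite cards1.
have -> : Vset a = set0.
  apply/setP => s; rewrite in_set0; apply/negbTE/negP => sV.
  by have := subsetP sub s sV; rewrite inE => /eqP Es; rewrite -Es sV in rhoV.
by rewrite cards0.
Qed.
End Shuffle.

Section Link.
Variable n : nat.
Implicit Types (u v w : Bn n).

Definition mkf (s : 'S_n) (t : 'I_n -> bool) (x : Defs.sval n) : Defs.sval n :=
  (x.1 (+) t x.2, s x.2).
Lemma mkf_inj s t : injective (mkf s t).
Proof.
move=> [b1 p1] [b2 p2] [] /= E1 /perm_inj E2; subst p2.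
by move: E1 => /addIb ->.
Qed.
Definition mkp s t : {perm Defs.sval n} := perm (@mkf_inj s t).
Lemma mkp_signed s t : is_signed (mkp s t).
Proof. by apply/forallP => [[b p]]; rewrite !permE /mkf /sneg /= addNb. Qed.
Definition mkB s t : Bn n := @exist _ (fun s => is_signed s) _ (mkp_signed s t).

Lemma ent_mkB s t p : ent (mkB s t) p = (t p, s p).
Proof. by rewrite /ent /= permE /mkf. Qed.

Definition sgnv w p := (ent w p).1.
Definition absp w : 'S_n := perm (@ent2_inj n w).
Lemma abspE w p : absp w p = (ent w p).2.
Proof. by rewrite permE. Qed.

Lemma mkB_abs w : mkB (absp w) (sgnv w) = w.
Proof.
apply: val_inj; apply/permP => [[b p]] /=; rewrite permE /mkf /= abspE /sgnv.
case: b => /=; last by rewrite -surjective_pairing.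
by have := ent_true w p; rewrite /sneg => ->.
Qed.

Lemma mkB_ext s t1 t2 : t1 =1 t2 -> mkB s t1 = mkB s t2.
Proof. by move=> E; apply: val_inj; apply/permP => x /=; rewrite !permE /mkf E. Qed.

Lemma mkB_inj t : injective (mkB ^~ t).
Proof.
move=> s1 s2 E; apply/permP => p.
by have := ent_mkB s1 t p; rewrite E ent_mkB => -[].
Qed.

Lemma abs_mkB s t : absp (mkB s t) = s.
Proof. by apply/permP => p; rewrite abspE ent_mkB. Qed.

Definition aw (t : 'I_n -> bool) w p : int := if t p then - W w p else W w p.

Lemma W_oppinj w p q : W w p = - W w q -> p = q.
Proof.
rewrite /W -sint_sneg => /sint_inj E; apply: (@ent2_inj n w).
by rewrite E /sneg.
Qed.

Lemma aw_inj t w : injective (aw t w).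
Proof.
move=> p q; rewrite /aw; case: (t p); case: (t q) => /= E.
- apply: (W_inj (w := w)); exact: oppr_inj E.
- apply: (W_oppinj (w := w)); by rewrite -E opprK.
- exact: (W_oppinj E).
- exact: (W_inj E).
Qed.

Lemma Wcomp w s t p : W (bcomp w (binv (mkB s t))) (s p) = aw t w p.
Proof.
rewrite /W /ent /= permM.
have -> : ((mkp s t)^-1)%g (false, s p) = (t p, p).
  apply: (@perm_inj _ (mkp s t)); rewrite permKV permE /mkf /= addbb //.
rewrite /aw; case: (t p) => //.
by rewrite ent_true sint_sneg.
Qed.

Lemma Wcomp' w s t q : W (bcomp w (binv (mkB s t))) q = aw t w ((s^-1)%g q).
Proof. by rewrite -(Wcomp w s t) permKV. Qed.

Definition inJ (J : {set 'I_n}) (k : nat) : bool := [exists i : 'I_n, (i \in J) && (val i == k)].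
Lemma inJE J (i : 'I_n) : inJ J i = (i \in J).
Proof.
apply/existsP/idP => [[j /andP[jJ /eqP /val_inj <-]]|iJ] //.
by exists i; rewrite iJ eqxx.
Qed.

Definition segn (J : {set 'I_n}) (q : nat) : nat := count (inJ J) (iota 1 q).
Definition segJ J (q : 'I_n) : nat := segn J q.

Lemma segnS J q : segn J q.+1 = (segn J q + inJ J q.+1)%N.
Proof.
rewrite /segn; have -> : iota 1 q.+1 = iota 1 q ++ [:: q.+1].
  by have E := iotaD 1 q 1; rewrite addn1 add1n in E; rewrite E.
by rewrite count_cat /= addn0.
Qed.

Lemma segJ_mono J : forall q r : 'I_n, (q <= r)%N -> (segJ J q <= segJ J r)%N.
Proof.
move=> q r qr; rewrite /segJ /segn -(subnKC qr) iotaD count_cat; exact: leq_addr.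
Qed.

Lemma loc_glob (J : {set 'I_n}) (A : 'I_n -> int) :
  (forall q q' : 'I_n, q' = q.+1 :> nat -> q' \notin J -> A q < A q') ->
  forall q r : 'I_n, (q < r)%N -> segJ J q = segJ J r -> A q < A r.
Proof.
move=> H.
have base : forall q r : 'I_n, r = q.+1 :> nat -> segJ J q = segJ J r -> A q < A r.
  move=> q r Er; rewrite /segJ Er segnS => /eqP.
  rewrite -{1}[segn J q]addn0 eqn_add2l eq_sym eqb0 -Er inJE => nJ; exact: H.
suff: forall d (q r : 'I_n), (r : nat) = (q + d.+1)%N -> segJ J q = segJ J r -> A q < A r.
  move=> K q r qr; apply: (K (r - q.+1)%N); lia.
elim => [|d IH] q r Er Es; first by apply: base => //; rewrite Er addn1.
have Hq1 : (q.+1 < n)%N by have := ltn_ord r; lia.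
set q1 : 'I_n := Ordinal Hq1.
have m1 := @segJ_mono J q q1 (leqnSn q).
have m2 : (segJ J q1 <= segJ J r)%N by apply: segJ_mono; rewrite /=; lia.
have E1 : segJ J q = segJ J q1 by apply/eqP; rewrite eqn_leq m1 Es m2.
apply: (@Order.POrderTheory.lt_trans _ _ (A q1)); first exact: base.
by apply: IH; [rewrite /=; lia | rewrite -E1].
Qed.

Lemma glob_loc (J : {set 'I_n}) (A : 'I_n -> int) :
  (forall q r : 'I_n, (q < r)%N -> segJ J q = segJ J r -> A q < A r) ->
  forall q q' : 'I_n, q' = q.+1 :> nat -> q' \notin J -> A q < A q'.
Proof.
move=> H q q' E nJ; apply: H; first by rewrite E.
by rewrite /segJ E segnS -E inJE (negbTE nJ) addn0.
Qed.

Lemma DesLocal u (J : {set 'I_n}) : (forall i : 'I_n, val i = 0%N -> i \in J) ->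
  (Des u \subset J) <-> (forall q q' : 'I_n, q' = q.+1 :> nat -> q' \notin J -> W u q < W u q').
Proof.
move=> J0; split.
  move=> /subsetP H q q' Eq nJ.
  have : q' \notin Des u by apply: contra nJ; apply: H.
  rewrite inE wvE Eq wvE -leNgt le_eqVlt => /orP[/eqP/W_inj E|//].
  by move: Eq; rewrite E; lia.
move=> H; apply/subsetP => i; rewrite inE => Hi.
case: (posnP i) => [/J0 //|ip].
have Hq : (i.-1 < n)%N by apply: leq_ltn_trans (ltn_ord i); exact: leq_pred.
apply: contraT => nJ.
have E : (i : nat) = (Ordinal Hq).+1 by rewrite /=; lia.
have H2 := H (Ordinal Hq) i E nJ.
rewrite -wvE -E -wvE in H2.
by have := Order.POrderTheory.lt_trans H2 Hi; rewrite Order.POrderTheory.ltxx.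
Qed.

Definition Zpred t (C : {set 'I_n}) v := [forall p, sgnv v p == t p] && Eok C (absp v).
Definition Zel t C : QB n := \sum_(v | Zpred t C v) basis v.

Lemma XJE J u : XJ J u = (Des u \subset J)%:R.
Proof. by rewrite /XJ sum_basisE. Qed.

Lemma ZelE t C v : Zel t C v = (Zpred t C v)%:R.
Proof. by rewrite /Zel sum_basisE. Qed.

Lemma sum_b2n (T : finType) (P : pred T) : \sum_(x : T) ((P x)%:R : rat) = (#|P|)%:R.
Proof.
rewrite -sum1_card natr_sum [in RHS]big_mkcond /=; apply: eq_bigr => x _.
by have -> : (x \in P) = P x by []; case: (P x).
Qed.

Lemma XZ_count (J : {set 'I_n}) t C w : (forall i : 'I_n, val i = 0%N -> i \in J) ->
  qbmul (XJ J) (Zel t C) w = (#|Vset (segJ J) C (aw t w)|)%:R.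
Proof.
move=> J0; rewrite qbmulE.
transitivity (\sum_v (((Zpred t C v && (Des (bcomp w (binv v)) \subset J)) : bool)%:R : rat)).
  by apply: eq_bigr => v _; rewrite XJE ZelE -natrM mulnb andbC.
rewrite sum_b2n -(card_imset _ (@mkB_inj t)); congr (_ %:R); apply: eq_card => v.
rewrite [in LHS]unfold_in /=; apply/idP/imsetP.
  move=> /andP[/andP[/forallP Hs E] D]; exists (absp v).
    rewrite inE E /=; have Ev : v = mkB (absp v) t.
      by rewrite -{1}(mkB_abs v); apply: mkB_ext => p; apply/eqP; apply: Hs.
    rewrite Ev in D; move/(DesLocal _ J0): D => D.
    apply/forallP => q; apply/forallP => r; apply/implyP => /andP[qr /eqP sqr].
    rewrite -!Wcomp'; exact: (loc_glob D qr sqr).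
  by rewrite -{1}(mkB_abs v); apply: mkB_ext => p; apply/eqP; apply: Hs.
move=> [s sV ->]; have := sV; rewrite inE => /andP[E K].
rewrite /Zpred abs_mkB E andbT; apply/andP; split.
  by apply/forallP => p; rewrite /sgnv ent_mkB.
apply/(DesLocal _ J0); apply: glob_loc => q r qr sqr.
rewrite !Wcomp'; exact: KokP K qr sqr.
Qed.

End Link.

Section IE.
Variable T : finType.

Lemma alt_sum (C : {set T}) :
  \sum_(S : {set T} | S \subset C) ((-1) ^+ #|S| : rat) = (C == set0)%:R.
Proof.
case: (eqVneq C set0) => [->|/set0Pn [x xC]].
  rewrite (big_pred1 set0) ?cards0 ?expr0 //.
  by move=> S; rewrite /= subset0.
set h := fun S : {set T} => if x \in S then S :\ x else x |: S.
have hK : involutive h.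
  move=> S; rewrite /h; case: (boolP (x \in S)) => xS.
    by rewrite setD11 setD1K.
  by rewrite setU11 setU1K.
have hinj : injective h := inv_inj hK.
set s := \sum_(S : {set T} | S \subset C) _.
have : s = - s.
  rewrite {1}/s (reindex_inj hinj) /= -sumrN; apply: eq_big => S.
    rewrite /h; case: ifP => xS.
      apply/idP/idP => H; last by apply: subset_trans (subD1set _ _) H.
      by rewrite -(setD1K xS) subUset sub1set xC H.
    by rewrite subUset sub1set xC.
  move=> _; rewrite /h; case: ifP => xS.
    by rewrite [in RHS](cardsD1 x S) xS add1n exprS mulN1r opprK.
  by rewrite cardsU1 xS add1n exprS mulN1r.
move=> E.
have -> : s = 0 by lra.
by [].
Qed.

Lemma IE_sum (K D : {set T}) :
  \sum_(S : {set T} | S \subset K) ((-1) ^+ #|S| * ([disjoint S & D])%:R : rat)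
  = (K \subset D)%:R.
Proof.
rewrite -setD_eq0 -alt_sum big_mkcond [RHS]big_mkcond /=; apply: eq_bigr => S _.
rewrite subsetD; case: (S \subset K) => /=; last by [].
by case: [disjoint S & D]; rewrite ?mulr1 ?mulr0.
Qed.
End IE.

Section InvI0.
Variable n : nat.
Local Notation Dp w := (Des w :\ (ord0 : 'I_n.+1)).

Lemma XJ0E (L : {set 'I_n.+1}) (w : Bn n.+1) :
  XJ ([set ord0] :|: L) w = (Dp w \subset L)%:R.
Proof. by rewrite XJE subDset. Qed.

Lemma I0_gen (L : {set 'I_n.+1}) : I0 n (XJ ([set ord0] :|: L)).
Proof. by apply: inspan_gen; exists ([set ord0] :|: L); rewrite !inE eqxx. Qed.

Definition ind (K : {set 'I_n.+1}) : QB n.+1 := \sum_(w | Dp w == K) basis w.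

Lemma ind_I0 K : I0 n (ind K).
Proof.
have -> : ind K = \sum_(S : {set 'I_n.+1} | S \subset K)
    scl ((-1) ^+ #|S|) (XJ ([set ord0] :|: (K :\: S))).
  apply/ffunP => w; rewrite /ind sum_basisE sum_ffunE.
  under eq_bigr do rewrite ffunE XJ0E subsetD.
  case DK: (Dp w \subset K) => /=.
    rewrite eqEsubset DK /= -(@IE_sum _ K (Dp w)).
    by apply: eq_bigr => S _; rewrite disjoint_sym.
  rewrite big1 ?eqEsubset ?DK // => S _; by rewrite mulr0.
by apply: inspan_sum => S _; apply: inspanZ; exact: I0_gen.
Qed.

Lemma inv_I0 (x : QB n.+1) :
  (forall w1 w2, Dp w1 = Dp w2 -> x w1 = x w2) -> I0 n x.
Proof.
move=> Hx.
pose c K := if [pick w | Dp w == K] is Some w0 then x w0 else 0.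
have -> : x = \sum_(K : {set 'I_n.+1}) scl (c K) (ind K).
  apply/ffunP => w; rewrite sum_ffunE.
  under eq_bigr do rewrite ffunE /ind sum_basisE.
  rewrite (bigD1 (Dp w)) //= eqxx mulr1 big1 ?addr0.
    rewrite /c; case: pickP => [w0 /eqP E|H]; first exact: Hx.
    by have := H w; rewrite eqxx.
  by move=> K /negbTE nK; rewrite eq_sym nK mulr0.
by apply: inspan_sum => K _; apply: inspanZ; exact: ind_I0.
Qed.

End InvI0.

Section Talpha.
Variable n : nat.
Implicit Types (v w : Bn n).

Lemma posW w (p : 'I_n) : (0 < W w p) = ~~ sgnv w p.
Proof. by rewrite /W /sgnv /sint; case: (ent w p).1. Qed.

Lemma absW w (p : 'I_n) : absz (W w p) = (absp w p).+1.
Proof. by rewrite abspE /W /sint; case: (ent w p).1. Qed.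

Lemma pos_atE w (j : 'I_n) : pos_at w j = ~~ sgnv w j.
Proof. by rewrite /pos_at wvE posW. Qed.

Lemma abs_atE w (j : 'I_n) : abs_at w j = (absp w j).+1.
Proof. by rewrite /abs_at wvE absW. Qed.

Lemma incrE w (j j1 : 'I_n) : j1 = j.+1 :> nat ->
  incr_at w j = (sgnv w j == sgnv w j1) && (absp w j < absp w j1)%N.
Proof.
move=> E; have H : (j.+1 < n)%N by rewrite -E ltn_ord.
have -> : j1 = Ordinal H by apply: ord_inj.
rewrite /incr_at pos_atE abs_atE /pos_at /abs_at (wv_lt w H) posW absW ltnS.
by case: (sgnv w j); case: (sgnv w (Ordinal H)).
Qed.

Definition Dv w : {set 'I_n} :=
  [set p : 'I_n | [exists p' : 'I_n, (p' == p.+1 :> nat) && (absp w p' < absp w p)%N]].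

Lemma EokE (C : {set 'I_n}) w : Eok C (absp w) = (Dv w \subset C).
Proof.
apply/forallP/subsetP => [H p|H p].
  rewrite inE => /existsP[p' /andP[/eqP Ep' lt']]; apply: contraTT lt' => pC.
  have := H p; move/forallP/(_ p')/implyP; rewrite Ep' eqxx pC => /(_ isT).
  by rewrite -leqNgt => /ltnW.
apply/forallP => p'; apply/implyP => /andP[/eqP Ep' pC].
have : p \notin Dv w by apply: contra pC; apply: H.
rewrite inE negb_exists => /forallP/(_ p'); rewrite Ep' eqxx /= -leqNgt leq_eqVlt.
case/orP => // /eqP/ord_inj/perm_inj E; by move: Ep'; rewrite E; lia.
Qed.

Lemma ZpredE t C w : Zpred t C w = [forall p, sgnv w p == t p] && (Dv w \subset C).
Proof. by rewrite /Zpred EokE. Qed.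

Variable al : seq int.
Definition tal (p : 'I_n) : bool := ~~ (0 < nth 0 al (blk al p)).
Definition Bal : {set 'I_n} := [set p : 'I_n | (p.+1 < n)%N && (p.+1 \in psums al)].
Definition Aal : {set 'I_n} := [set p in Bal | [forall p' : 'I_n, (p' == p.+1 :> nat) ==> (tal p == tal p')]].

Lemma blkS j : j.+1 \notin psums al -> blk al j.+1 = blk al j.
Proof.
rewrite /blk; elim: (psums al) => //= a l IH; rewrite inE negb_or => /andP[ne nl].
rewrite IH //; congr (_ + _)%N; rewrite [in LHS]leq_eqVlt ltnS eq_sym.
by rewrite (negbTE ne).
Qed.

Lemma tal_next (j j1 : 'I_n) : j1 = j.+1 :> nat -> j \notin Bal -> tal j1 = tal j.
Proof.
move=> E; rewrite inE -E ltn_ord /= => nB.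
by rewrite /tal E blkS // -E.
Qed.

Lemma inTE w : inT al w =
  [forall p, sgnv w p == tal p] && (Dv w \subset Bal) && (Aal \subset Dv w).
Proof.
rewrite /inT.
have -> : [forall j : 'I_n, pos_at w j == (0 < nth 0 al (blk al j))] = [forall p, sgnv w p == tal p].
  apply: eq_forallb => j; rewrite pos_atE /tal.
  by case: (sgnv w j); case: (0 < nth 0 al (blk al j)).
case sg: [forall p, sgnv w p == tal p] => //=.
have sgE : forall p, sgnv w p = tal p by move=> p; apply/eqP; move/forallP: sg; apply.
apply/idP/idP.
  move/forallP => H; apply/andP; split.
    apply/subsetP => p; rewrite inE => /existsP[p' /andP[/eqP Ep' lt']].
    apply: contraTT lt' => pB; rewrite -leqNgt; apply: ltnW.
    have := H p; have Hp : (p.+1 < n)%N by rewrite -Ep' ltn_ord.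
    rewrite Hp /=; have -> : (p.+1 \in psums al) = false.
      by apply: negbTE; move: pB; rewrite inE Hp.
    by rewrite (incrE _ Ep') => /andP[].
  apply/subsetP => p; rewrite inE => /andP[pB /forallP Hs].
  have Hp : (p.+1 < n)%N by move: pB; rewrite inE => /andP[].
  have := H p; rewrite Hp /=; move: (pB); rewrite inE Hp /= => ->.
  set p1 : 'I_n := Ordinal Hp.
  have Ep1 : p1 = p.+1 :> nat by [].
  rewrite (incrE _ Ep1) !sgE (eqP (implyP (Hs p1) (eqxx _))) eqxx /= -leqNgt leq_eqVlt.
  case/orP => [/eqP/ord_inj/perm_inj E|lt']; first by move: Ep1; rewrite E; lia.
  by rewrite inE; apply/existsP; exists p1; rewrite lt' eqxx.
move=> /andP[/subsetP DB /subsetP AD]; apply/forallP => j; apply/implyP => Hj.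
set j1 : 'I_n := Ordinal Hj.
have Ej1 : j1 = j.+1 :> nat by [].
rewrite (incrE _ Ej1) !sgE.
case: (boolP (j \in Bal)) => jB.
  have -> : (j.+1 \in psums al) by move: jB; rewrite inE => /andP[].
  case: (boolP (tal j == tal j1)) => //= Et.
  have : j \in Aal.
    rewrite inE jB /=; apply/forallP => p'; apply/implyP => /eqP Ep'.
    by have -> : p' = j1 by apply: ord_inj; rewrite Ep'.
  move/AD; rewrite inE => /existsP[p' /andP[/eqP Ep' lt']].
  have -> : j1 = p' by apply: ord_inj; rewrite Ep'.
  by rewrite -leqNgt ltnW.
have -> : (j.+1 \in psums al) = false.
  by apply: negbTE; move: jB; rewrite inE Hj.
rewrite (tal_next Ej1 jB) eqxx /=.
have : j \notin Dv w by apply: contra jB; apply: DB.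
rewrite inE negb_exists => /forallP/(_ j1); rewrite Ej1 eqxx /= -leqNgt leq_eqVlt.
case/orP => // /eqP/ord_inj/perm_inj E; by move: Ej1; rewrite E; lia.
Qed.

Lemma Talpha_decomp : Talpha n al =
  \sum_(S : {set 'I_n} | S \subset Aal) scl ((-1) ^+ #|S|) (Zel tal (Bal :\: S)).
Proof.
apply/ffunP => w; rewrite /Talpha sum_basisE sum_ffunE.
under eq_bigr do rewrite ffunE ZelE ZpredE subsetD.
rewrite inTE; case: [forall p, sgnv w p == tal p] => /=; last first.
  by rewrite big1 // => S _; rewrite mulr0.
case: (Dv w \subset Bal) => /=; last by rewrite big1 // => S _; rewrite mulr0.
rewrite -(@IE_sum _ Aal (Dv w)); apply: eq_bigr => S _.
by rewrite disjoint_sym.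
Qed.

End Talpha.

Section MkAl.
Local Open Scope nat_scope.

Lemma iotaS0 N : iota 0 N.+1 = iota 0 N ++ [:: N].
Proof. by have E := iotaD 0 N 1; rewrite addn1 add0n in E; rewrite E. Qed.

Lemma down_le (P : pred nat) : (forall j, P j.+1 -> P j) -> forall k j, j <= k -> P k -> P j.
Proof.
move=> HP; elim => [|k IH] j; first by rewrite leqn0 => /eqP ->.
rewrite leq_eqVlt => /orP[/eqP -> //|]; rewrite ltnS => jk Pk.
exact: IH jk (HP _ Pk).
Qed.

Lemma prefix_count (P : pred nat) N : (forall j, P j.+1 -> P j) ->
  forall j, j < N -> (j < count P (iota 0 N)) = P j.
Proof.
move=> HP; elim: N => [//|N IH] j; rewrite ltnS iotaS0 count_cat /= addn0.
case PN: (P N).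
  have -> : count P (iota 0 N) = N.
    rewrite -[RHS](size_iota 0 N) -count_predT; apply: eq_in_count => x.
    by rewrite mem_iota add0n /= => xN; apply: (down_le HP (ltnW xN) PN).
  by move=> jN; rewrite addn1 ltnS jN (down_le HP jN PN).
rewrite addn0 leq_eqVlt => /orP[/eqP ->|]; last exact: IH.
rewrite PN; apply/negbTE; rewrite -leqNgt.
by have := count_size P (iota 0 N); rewrite size_iota.
Qed.

Lemma count_lt_iota c M : count (fun k => k < c) (iota 0 M) = minn c M.
Proof.
elim: M => [|M IH]; first by rewrite minn0.
rewrite iotaS0 count_cat IH /=; case: (ltnP M c) => H /=; lia.
Qed.

Lemma count_split (f : nat -> nat) (l : seq nat) i :
  count (fun j => f j < i) l + count (fun j => f j == i) l = count (fun j => f j <= i) l.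
Proof.
rewrite -count_predUI (@eq_count _ (predI _ _) pred0) ?count_pred0 ?addn0.
  by apply: eq_count => x /=; case: (ltngtP (f x) i).
by move=> x /=; case: (ltngtP (f x) i).
Qed.

Lemma sum_count (f : nat -> nat) (l : seq nat) K :
  sumn [seq count (fun j => f j == k) l | k <- iota 0 K] = count (fun j => f j < K) l.
Proof.
elim: K => [|K IH]; first by rewrite /= (@eq_count _ _ pred0) ?count_pred0.
by rewrite iotaS0 map_cat sumn_cat IH /= addn0 count_split.
Qed.

Lemma scanl_count (f : nat -> nat) (l : seq nat) M : forall i,
  scanl addn (count (fun j => f j < i) l) [seq count (fun j => f j == k) l | k <- iota i M]
  = [seq count (fun j => f j <= k) l | k <- iota i M].
Proof.
elim: M => [//|M IH] i /=; rewrite count_split; congr (_ :: _).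
rewrite -IH; congr (scanl _ _ _); apply: eq_count => x; by rewrite ltnS.
Qed.

Variable n : nat.
Variable s : 'I_n -> bool.
Variable B : {set 'I_n}.
Hypothesis HB : forall p, p \in B -> p.+1 < n.
Hypothesis Hval : forall p p' : 'I_n, p' = p.+1 :> nat -> s p != s p' -> p \in B.

Definition inB (i : nat) : bool := [exists p : 'I_n, (p \in B) && (val p == i)].
Lemma inBE (p : 'I_n) : inB p = (p \in B).
Proof.
apply/existsP/idP => [[j /andP[jJ /eqP /val_inj <-]]|iJ] //.
by exists p; rewrite iJ eqxx.
Qed.

Definition cutp (i : nat) : bool := (i.+1 == n) || inB i.
Definition bidx (j : nat) : nat := count cutp (iota 0 j).
Definition mm := bidx n.
Definition lenk (k : nat) : nat := count (fun j => bidx j == k) (iota 0 n).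
Definition sgnk (k : nat) : bool := if [pick p : 'I_n | bidx p == k] is Some p then s p else false.
Definition part (k : nat) : int := if sgnk k then - (lenk k)%:Z else (lenk k)%:Z.
Definition mkal : seq int := map part (iota 0 mm).

Lemma bidxS j : bidx j.+1 = bidx j + cutp j.
Proof. by rewrite /bidx iotaS0 count_cat /= addn0. Qed.

Lemma bidx_mono j j' : j <= j' -> bidx j <= bidx j'.
Proof. move=> H; rewrite /bidx -(subnKC H) iotaD count_cat; exact: leq_addr. Qed.

Lemma bidx_lt j : j < n -> bidx j < mm.
Proof.
move=> jn; rewrite /mm; have Hn : n = n.-1.+1 by lia.
rewrite Hn bidxS /cutp -Hn eqxx /= addn1 ltnS; apply: bidx_mono; lia.
Qed.

Lemma bidx_ivt k : k < mm -> exists2 j, j < n & bidx j = k.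
Proof.
rewrite /mm; suff: forall N, N <= n -> k < bidx N -> exists2 j, j < n & bidx j = k.
  by apply.
elim => [|N IH] Nn; first by rewrite /bidx.
rewrite bidxS => Hk; case: (ltnP k (bidx N)) => H.
  by apply: IH => //; exact: ltnW.
by exists N => //; move: Hk H; case: (cutp N) => /=; lia.
Qed.

Lemma lenk_gt0 k : k < mm -> 0 < lenk k.
Proof.
move=> /bidx_ivt [j jn Ej]; rewrite /lenk -has_count; apply/hasP.
by exists j; rewrite ?mem_iota ?add0n ?Ej ?eqxx.
Qed.

Lemma bidx_const (p q : 'I_n) : bidx p = bidx q -> s p = s q.
Proof.
wlog pq : p q / p <= q.
  move=> H E; case: (leqP p q) => pq; first exact: H.
  by apply/esym; apply: H; [exact: ltnW| done].
suff K : forall d (p q : 'I_n), (q : nat) = p + d -> bidx p = bidx q -> s p = s q.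
  by apply: (K (q - p)); lia.
elim => [|d IH] {pq}p {}q Eq E; first by congr s; apply: ord_inj; lia.
have Hp1 : p.+1 < n by have := ltn_ord q; lia.
set p1 : 'I_n := Ordinal Hp1.
have m1 : bidx p <= bidx p1 by apply: bidx_mono => /=.
have m2 : bidx p1 <= bidx q by apply: bidx_mono; rewrite /=; lia.
have E1 : bidx p1 = bidx p by apply/eqP; rewrite eqn_leq m1 E m2.
have cp : cutp p = false by move: E1; rewrite /= bidxS; case: (cutp p) => //=; lia.
have nB : p \notin B by rewrite -inBE; move: cp; rewrite /cutp => /norP[].
have Es : s p = s p1.
  by apply/eqP; apply: contraNT nB => H; apply: (Hval (p' := p1)).
rewrite Es; apply: IH; first by rewrite /=; lia.
by rewrite E1.
Qed.

Lemma size_mkal : size mkal = mm.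
Proof. by rewrite /mkal size_map size_iota. Qed.

Lemma nth_mkal k : k < mm -> nth 0%R mkal k = part k.
Proof. by move=> H; rewrite /mkal (nth_map 0) ?size_iota // nth_iota. Qed.

Lemma abs_part k : absz (part k) = lenk k.
Proof. by rewrite /part; case: (sgnk k) => //=; rewrite abszN. Qed.

Lemma map_abs_mkal : map absz mkal = map lenk (iota 0 mm).
Proof. by rewrite /mkal -map_comp; apply: eq_map => k /=; rewrite abs_part. Qed.

Definition Nk (k : nat) : nat := count (fun j => bidx j <= k) (iota 0 n).

Lemma psums_mkal : psums mkal = map Nk (iota 0 mm).
Proof.
rewrite /psums map_abs_mkal.
have := scanl_count bidx (iota 0 n) mm 0.
by rewrite (@eq_count _ _ pred0) ?count_pred0.
Qed.

Lemma Nk_prefix k j : j < n -> (j < Nk k) = (bidx j <= k).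
Proof.
move=> jn; rewrite /Nk (prefix_count (P := fun j => bidx j <= k)) //.
by move=> i /= H; apply: leq_trans H; apply: bidx_mono.
Qed.

Lemma blk_mkal j : j < n -> blk mkal j = bidx j.
Proof.
move=> jn; rewrite /blk psums_mkal count_map.
rewrite (@eq_count _ _ (fun k => k < bidx j)) ?count_lt_iota.
  by apply/minn_idPl; apply: ltnW; apply: bidx_lt.
by move=> k /=; rewrite leqNgt Nk_prefix // -ltnNge.
Qed.

Lemma tal_mkal (p : 'I_n) : ~~ (0 < nth 0 mkal (blk mkal p))%R = s p.
Proof.
rewrite blk_mkal // nth_mkal ?bidx_lt //.
have Hl := lenk_gt0 (bidx_lt (ltn_ord p)).
have -> : ~~ (0 < part (bidx p))%R = sgnk (bidx p).
  rewrite /part; case: (sgnk _) => /=.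
    by rewrite oppr_gt0 ltNge; apply/negbK; rewrite lez_nat.
  by rewrite ltz_nat Hl.
rewrite /sgnk; case: pickP => [p0 /eqP E|H]; first exact: bidx_const.
by have := H p; rewrite eqxx.
Qed.

Lemma Bal_mkal (p : 'I_n) : (p.+1 < n) && (p.+1 \in psums mkal) = (p \in B).
Proof.
rewrite psums_mkal; apply/idP/idP.
  move=> /andP[Hp /mapP[k]]; rewrite mem_iota add0n => /andP[_ km] Ek.
  have h1 : bidx p <= k by rewrite -Nk_prefix // -Ek.
  have h2 : ~~ (bidx p.+1 <= k) by rewrite -Nk_prefix // -Ek ltnn.
  rewrite -inBE; move: h2; rewrite bidxS /cutp (ltn_eqF Hp) /=.
  by case: (inB p) => //=; rewrite addn0 h1.
move=> pB; have Hp := HB pB; rewrite Hp /=; apply/mapP; exists (bidx p).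
  by rewrite mem_iota add0n /= bidx_lt.
apply/eqP; rewrite eqn_leq Nk_prefix ?leqnn //=.
by rewrite leqNgt Nk_prefix // bidxS /cutp inBE pB orbT addn1 ltnn.
Qed.

Lemma scomp_mkal : is_scomp n mkal.
Proof.
apply/andP; split.
  apply/allP => a /mapP[k]; rewrite mem_iota add0n => /andP[_ km] ->.
  by rewrite -absz_eq0 abs_part -lt0n lenk_gt0.
rewrite map_abs_mkal sum_count (@eq_in_count _ _ predT) ?count_predT ?size_iota //.
by move=> j; rewrite mem_iota add0n /= => jn; apply: bidx_lt.
Qed.

End MkAl.

Section OmegaInv.
Variable n : nat.
Implicit Types (w : Bn n).

Definition sgnf w : {ffun 'I_n -> bool} := [ffun p => sgnv w p].
Definition runB w : {set 'I_n} := [set j : 'I_n | (j.+1 < n)%N && ~~ incr_at w j].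

Lemma DvE w (p p1 : 'I_n) : p1 = p.+1 :> nat -> (p \in Dv w) = (absp w p1 < absp w p)%N.
Proof.
move=> E; rewrite inE; apply/existsP/idP => [[p' /andP[/eqP E' H]]|H].
  by have -> : p1 = p' by apply: ord_inj; rewrite E E'.
by exists p1; rewrite E eqxx H.
Qed.

Lemma Dv_lt w (p : 'I_n) : p \in Dv w -> (p.+1 < n)%N.
Proof. by rewrite inE => /existsP[p' /andP[/eqP <- _]]. Qed.

Lemma abs_neq w (p p1 : 'I_n) : p1 = p.+1 :> nat ->
  ~~ (absp w p < absp w p1)%N = (absp w p1 < absp w p)%N.
Proof.
move=> E; rewrite -leqNgt leq_eqVlt; case: eqP => //= /ord_inj /perm_inj E2.
by move: E; rewrite E2; lia.
Qed.

Lemma runBE w (p p1 : 'I_n) : p1 = p.+1 :> nat ->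
  (p \in runB w) = (sgnv w p != sgnv w p1) || (p \in Dv w).
Proof.
move=> E; rewrite inE -E ltn_ord /= (incrE _ E) negb_and (DvE _ E) abs_neq //.
Qed.

Lemma runB_lt w (p : 'I_n) : p \in runB w -> (p.+1 < n)%N.
Proof. by rewrite inE => /andP[]. Qed.

Section Class.
Variable w0 : Bn n.
Let s := sgnv w0.
Let B := runB w0.
Lemma HB0 : forall p, p \in B -> (p.+1 < n)%N.
Proof. exact: runB_lt. Qed.
Lemma Hval0 : forall p p' : 'I_n, p' = p.+1 :> nat -> s p != s p' -> p \in B.
Proof. by move=> p p' E H; rewrite /B (runBE _ E) H. Qed.
Let al := mkal s B.

Lemma tal0 p : tal al p = s p.
Proof. exact: (tal_mkal Hval0). Qed.

Lemma Bal0 : Bal n al = B.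
Proof. by apply/setP => p; rewrite inE (Bal_mkal s HB0). Qed.

Lemma inT0 w : inT al w = (sgnf w == sgnf w0) && (runB w == B).
Proof.
rewrite inTE Bal0.
have -> : [forall p, sgnv w p == tal al p] = (sgnf w == sgnf w0).
  apply/forallP/eqP => [H|E p].
    by apply/ffunP => p; rewrite !ffunE; have := H p; rewrite tal0 => /eqP.
  by rewrite tal0 /s; have := congr1 (fun f : {ffun 'I_n -> bool} => f p) E; rewrite !ffunE => ->.
case sg: (sgnf w == sgnf w0) => //=.
have sgE : forall p, sgnv w p = s p.
  by move=> p; have := congr1 (fun f : {ffun 'I_n -> bool} => f p) (eqP sg); rewrite !ffunE.
apply/idP/idP.
  move=> /andP[/subsetP DB /subsetP AD]; apply/eqP/setP => p.
  case: (ltnP p.+1 n) => Hp; last first.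
    rewrite inE ltnNge Hp /=; apply/esym/negbTE; apply/negP => /HB0; rewrite ltnNge Hp.
    done.
  set p1 : 'I_n := Ordinal Hp; have E1 : p1 = p.+1 :> nat by [].
  rewrite (runBE _ E1) !sgE.
  case: (boolP (s p != s p1)) => /= Hs; first by apply/esym; apply: Hval0 Hs.
  apply/idP/idP => [/DB //|pB]; apply: AD; rewrite inE Bal0 pB /=.
  apply/forallP => p'; apply/implyP => /eqP Ep'.
  have -> : p' = p1 by apply: ord_inj; rewrite Ep'.
  by rewrite !tal0; move: Hs; rewrite negbK.
move=> /eqP RB; apply/andP; split.
  apply/subsetP => p pD; have Hp := Dv_lt pD.
  set p1 : 'I_n := Ordinal Hp; have E1 : p1 = p.+1 :> nat by [].
  by rewrite -RB (runBE _ E1) pD orbT.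
apply/subsetP => p; rewrite inE Bal0 => /andP[pB /forallP Hs].
have Hp := HB0 pB; set p1 : 'I_n := Ordinal Hp; have E1 : p1 = p.+1 :> nat by [].
move: pB; rewrite -RB (runBE _ E1) !sgE.
by have := implyP (Hs p1) (eqxx _); rewrite !tal0 => ->.
Qed.

Lemma cls0 : \sum_(w | (sgnf w, runB w) == (sgnf w0, B)) basis w = Talpha n al.
Proof.
apply/ffunP => w; rewrite /Talpha !sum_basisE inT0.
by rewrite xpair_eqE.
Qed.

Lemma cls0_Omega : Omega n (\sum_(w | (sgnf w, runB w) == (sgnf w0, B)) basis w).
Proof.
rewrite cls0; apply: inspan_gen; exists al; split => //.
exact: scomp_mkal.
Qed.
End Class.

Lemma Omega_inv (x : QB n) :
  (forall w1 w2, sgnf w1 = sgnf w2 -> runB w1 = runB w2 -> x w1 = x w2) -> Omega n x.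
Proof.
move=> Hx.
pose cls (k : {ffun 'I_n -> bool} * {set 'I_n}) := \sum_(w | (sgnf w, runB w) == k) basis w.
pose c k := if [pick w | (sgnf w, runB w) == k] is Some w0 then x w0 else 0.
have -> : x = \sum_k scl (c k) (cls k).
  apply/ffunP => w; rewrite sum_ffunE.
  under eq_bigr do rewrite ffunE /cls sum_basisE.
  rewrite (bigD1 (sgnf w, runB w)) //= eqxx mulr1 big1 ?addr0.
    rewrite /c; case: pickP => [w0 /eqP [E1 E2]|H]; first exact: Hx.
    by have := H w; rewrite eqxx.
  by move=> K /negbTE nK; rewrite eq_sym nK mulr0.
apply: inspan_sum => k _; apply: inspanZ.
case: (pickP (fun w => (sgnf w, runB w) == k)) => [w0 /eqP Ek|H].
  by rewrite /cls -Ek; exact: cls0_Omega.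
have -> : cls k = 0.
  by apply/ffunP => w; rewrite /cls sum_basisE H ffunE.
exact: inspan0.
Qed.
End OmegaInv.

Section Final.
Variable n : nat.
Local Notation N := n.+1.

Lemma qbmul_sumr (x : QB N) (I : finType) (P : pred I) (F : I -> QB N) :
  qbmul x (\sum_(i | P i) F i) = \sum_(i | P i) qbmul x (F i).
Proof.
elim/big_rec2: _ => [|i y1 y2 Pi <-]; [exact: qbmul0r | exact: qbmulDr].
Qed.

Lemma Wgt_Des (w : Bn N) (p p' : 'I_N) : p' = p.+1 :> nat ->
  (W w p' < W w p) = (p' \in Des w).
Proof. by move=> E; rewrite inE wvE E wvE. Qed.

Lemma Wlt_Des (w : Bn N) (p p' : 'I_N) : p' = p.+1 :> nat ->
  (W w p < W w p') = (p' \notin Des w).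
Proof.
move=> E; rewrite -(Wgt_Des _ E) -leNgt le_eqVlt; case: eqP => //= /W_inj E2.
by move: E; rewrite E2; lia.
Qed.

Lemma ord0E (i : 'I_N) : val i = 0%N -> i = ord0.
Proof. by move=> H; apply: ord_inj. Qed.

Lemma XZ_I0 (J : {set 'I_N}) (HJ : ord0 \in J) t (C : {set 'I_N}) :
  (forall p p' : 'I_N, p' = p.+1 :> nat -> p \notin C -> t p = t p') ->
  I0 n (qbmul (XJ J) (Zel t C)).
Proof.
move=> Ht; have J0 : forall i : 'I_N, val i = 0%N -> i \in J by move=> i /ord0E ->.
apply: inv_I0 => w1 w2 ED; rewrite !(XZ_count _ _ _ J0); congr (_ %:R).
apply: (Vset_card (@segJ_mono _ J) (@aw_inj _ t w1) (@aw_inj _ t w2)).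
move=> p p' E nC; rewrite /aw -(Ht p p' E nC).
have D : (p' \in Des w1) = (p' \in Des w2).
  have nz : p' != ord0 by apply/eqP => H; move: E; rewrite H.
  by have := congr1 (fun A : {set 'I_N} => p' \in A) ED; rewrite /= !in_setD1 nz.
case: (t p).
  by rewrite !ltrN2 !(Wgt_Des _ E) D.
by rewrite !(Wlt_Des _ E) D.
Qed.

Lemma claim2 x y : I0 n x -> Omega N y -> I0 n (qbmul x y).
Proof.
move=> Ix; move: x Ix y.
apply: (inspan_ind (P := fun x => forall y, Omega N y -> I0 n (qbmul x y))).
- by move=> y _; rewrite qbmul0l; exact: inspan0.
- by move=> x1 x2 H1 H2 y Hy; rewrite qbmulDl; apply: inspanD; [apply: H1|apply: H2].
- by move=> c x1 H y Hy; rewrite qbmulZl; apply: inspanZ; apply: H.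
move=> g [J [HJ ->]].
apply: inspan_ind.
- by rewrite qbmul0r; exact: inspan0.
- by move=> y1 y2 H1 H2; rewrite qbmulDr; apply: inspanD.
- by move=> c y1 H; rewrite qbmulZr; apply: inspanZ.
move=> g' [al [_ ->]].
rewrite Talpha_decomp qbmul_sumr; apply: inspan_sum => S SA.
rewrite qbmulZr; apply: inspanZ; apply: XZ_I0 => // p p' E.
rewrite inE negb_and negbK => /orP[pS|nB].
  have := subsetP SA p pS; rewrite inE => /andP[_ /forallP /(_ p') /implyP].
  by rewrite E eqxx => /(_ isT) /eqP.
by rewrite (tal_next E nB).
Qed.

Lemma Wsgn (w : Bn N) p : W w p = if sgnv w p then - ((absp w p).+1)%:Z else ((absp w p).+1)%:Z.
Proof. by rewrite /W abspE /sgnv /sint. Qed.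

Lemma Des_formula (w : Bn N) (p i : 'I_N) : i = p.+1 :> nat ->
  (W w i < W w p) = if sgnv w p == sgnv w i then
     (if sgnv w p then p \notin runB w else p \in runB w) else ~~ sgnv w p.
Proof.
move=> E; rewrite (runBE _ E) (DvE _ E) !Wsgn.
case: (sgnv w p); case: (sgnv w i) => /=; rewrite ?ltrN2 ?ltz_nat ?ltnS //.
- by rewrite -(abs_neq w E) negbK.
Qed.

Lemma claim1 x : I0 n x -> Omega N x.
Proof.
apply: inspan_trans => g [J [HJ ->]]; apply: Omega_inv => w1 w2 Es ER.
rewrite !XJE; suff -> : Des w1 = Des w2 by []; apply/setP => i.
have sE : forall p, sgnv w1 p = sgnv w2 p.
  by move=> p; have := congr1 (fun f : {ffun 'I_N -> bool} => f p) Es; rewrite !ffunE.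
case: (posnP i) => [/ord0E ->|ip].
  by rewrite !inE !wvE /= !Wsgn sE; case: (sgnv w2 ord0).
have Hp : (i.-1 < N)%N by apply: leq_ltn_trans (ltn_ord i); exact: leq_pred.
set p : 'I_N := Ordinal Hp; have E : i = p.+1 :> nat by rewrite /=; lia.
by rewrite -!(Wgt_Des _ E) !(Des_formula _ E) !sE ER.
Qed.

Lemma X0_I0 : I0 n (XJ [set ord0 : 'I_N]).
Proof. by apply: inspan_gen; exists [set ord0]; split => //; rewrite inE. Qed.

Lemma segJ0 (q : 'I_N) : segJ [set ord0 : 'I_N] q = 0%N.
Proof.
rewrite /segJ /segn (@eq_in_count _ _ pred0) ?count_pred0 // => k.
rewrite mem_iota => /andP[k1 _] /=; apply/existsP => -[i /andP[/set1P Ei /eqP E]].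
by move: k1; rewrite -E Ei.
Qed.

Lemma Dv_runB (w : Bn N) : (forall p, sgnv w p = false) -> Dv w = runB w.
Proof.
move=> H; apply/setP => p; case: (ltnP p.+1 N) => Hp.
  set p1 : 'I_N := Ordinal Hp; have E : p1 = p.+1 :> nat by [].
  by rewrite (runBE _ E) !H.
apply/idP/idP => [/Dv_lt|/runB_lt]; by rewrite ltnNge Hp.
Qed.

Lemma claim3 x : I0 n x <-> exists y, Omega N y /\ x = qbmul (XJ [set ord0]) y.
Proof.
split; last first.
  by move=> [y [Oy ->]]; apply: claim2 => //; exact: X0_I0.
move: x; apply: inspan_ind.
- by exists 0; split; [exact: inspan0 | rewrite qbmul0r].
- move=> x1 x2 [y1 [O1 ->]] [y2 [O2 ->]]; exists (y1 + y2); split; first exact: inspanD.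
  by rewrite qbmulDr.
- move=> c x1 [y1 [O1 ->]]; exists (scl c y1); split; first exact: inspanZ.
  by rewrite qbmulZr.
move=> g [J [HJ ->]].
set CJ := [set p : 'I_N | inJ J p.+1].
exists (Zel (fun _ => false) CJ); split.
  apply: Omega_inv => w1 w2 Es ER; rewrite !ZelE !ZpredE.
  have sE : forall p, sgnv w1 p = sgnv w2 p.
    by move=> p; have := congr1 (fun f : {ffun 'I_N -> bool} => f p) Es; rewrite !ffunE.
  have -> : [forall p, sgnv w1 p == false] = [forall p, sgnv w2 p == false].
    by apply: eq_forallb => p; rewrite sE.
  case A: [forall p, sgnv w2 p == false] => //=.
  have A2 : forall p, sgnv w2 p = false by move=> p; apply/eqP; move/forallP: A; apply.
  have A1 : forall p, sgnv w1 p = false by move=> p; rewrite sE.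
  by rewrite (Dv_runB A1) (Dv_runB A2) ER.
have J0 : forall i : 'I_N, val i = 0%N -> i \in [set ord0] by move=> i /ord0E ->; rewrite inE.
apply/ffunP => w; rewrite XJE (XZ_count _ _ _ J0).
rewrite (Vset_const (@segJ_mono _ _) CJ (@aw_inj _ _ w)); last by move=> q r; rewrite !segJ0.
apply: (congr1 (fun b : bool => ((b : nat)%:R : rat))); apply/idP/idP.
  move/(DesLocal _ (fun i (H : val i = 0%N) => eq_ind_r (fun j => j \in J) HJ (ord0E H))) => H.
  apply/forallP => p; apply/forallP => p'; apply/implyP => /andP[/eqP E nC].
  rewrite /aw /=; apply: H => //.
  by move: nC; rewrite inE -E inJE.
move=> H; apply/(DesLocal _ (fun i (H : val i = 0%N) => eq_ind_r (fun j => j \in J) HJ (ord0E H))).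
move=> q q' E nJ; have := H; move/forallP/(_ q)/forallP/(_ q')/implyP; rewrite /aw /=; apply.
by rewrite E eqxx /= inE -E inJE.
Qed.

End Final.

Unset Implicit Arguments.

Theorem corollary7p7 (n : nat) :
  (forall x, I0 n x -> Omega n.+1 x) /\
  (forall x y, I0 n x -> Omega n.+1 y -> I0 n (qbmul x y)) /\
  (forall x, I0 n x <-> exists y, Omega n.+1 y /\ x = qbmul (XJ [set ord0]) y).
Proof.
split; first by move=> x; exact: claim1.
split; first by move=> x y; exact: claim2.
by move=> x; exact: claim3.
Qed.
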